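(* If $(X,(f_n))$ is a complex situation, then $A^f$ is a $\Sigma^0_2$ digraph on $X$ of uncountable Borel chromatic number.
   Context: For a sequence $(f_n)$ of partial functions, $A^f:=\bigcup_n\mathrm{Graph}(f_n)$. A complex situation is a pair $(X,(f_n)_{n\in\omega})$ where $X$ is a nonempty Polish space, each $f_n$ is a partial continuous open map on $X$ whose domain and range are open in $X$, and $\Delta(X)\subseteq\overline{A^f}\setminus A^f$ ($\Delta(X)$ the diagonal). A digraph is a relation disjoint from the diagonal; its Borel chromatic number is the least cardinality of a Polish $Y$ admitting a Borel $c:X\to Y$ with $c(x)\neq c(x')$ for $(x,x')$ in the relation. *)

(* Defs.v *)
From Stdlib Require Import Reals.
Open Scope R_scope.

Record Polish := {
  carrier :> Type;
  dist : carrier -> carrier -> R;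
  dist_nonneg : forall x y, 0 <= dist x y;
  dist_eq0 : forall x y, dist x y = 0 <-> x = y;
  dist_sym : forall x y, dist x y = dist y x;
  dist_tri : forall x y z, dist x z <= dist x y + dist y z;
  dist_complete : forall u : nat -> carrier,
    (forall eps, 0 < eps -> exists N, forall m n, (N <= m)%nat -> (N <= n)%nat ->
        dist (u m) (u n) < eps) ->
    exists l, forall eps, 0 < eps -> exists N, forall n, (N <= n)%nat -> dist (u n) l < eps;
  (* countable dense subset (possibly empty, allowing the empty space) *)
  dist_separable : exists s : nat -> option carrier,
    forall x eps, 0 < eps -> exists n y, s n = Some y /\ dist x y < eps
}.

Arguments dist {p} _ _.

Definition is_open {X : Polish} (U : X -> Prop) : Prop :=
  forall x, U x -> exists eps, 0 < eps /\ forall y, dist x y < eps -> U y.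

Definition is_open2 {X : Polish} (U : X -> X -> Prop) : Prop :=
  forall x y, U x y -> exists eps, 0 < eps /\
    forall x' y', dist x x' < eps -> dist y y' < eps -> U x' y'.

Definition is_closed2 {X : Polish} (F : X -> X -> Prop) : Prop :=
  is_open2 (fun x y => ~ F x y).

Definition Sigma02 {X : Polish} (A : X -> X -> Prop) : Prop :=
  exists F : nat -> X -> X -> Prop, (forall n, is_closed2 (F n)) /\
    forall x y, A x y <-> exists n, F n x y.

Definition closure2 {X : Polish} (A : X -> X -> Prop) (x y : X) : Prop :=
  forall eps, 0 < eps -> exists x' y', dist x x' < eps /\ dist y y' < eps /\ A x' y'.

Definition borel {X : Polish} (B : X -> Prop) : Prop :=
  forall S : (X -> Prop) -> Prop,
    (forall U, is_open U -> S U) ->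
    (forall A, S A -> S (fun x => ~ A x)) ->
    (forall An : nat -> X -> Prop, (forall n, S (An n)) -> S (fun x => exists n, An n x)) ->
    (forall A A', (forall x, A x <-> A' x) -> S A -> S A') ->
    S B.

Definition borel_fun {X Y : Polish} (c : X -> Y) : Prop :=
  forall V : Y -> Prop, is_open V -> borel (fun x => V (c x)).

Definition countable_type (T : Type) : Prop :=
  exists g : T -> nat, forall a b, g a = g b -> a = b.

(* A partial map on X: a domain together with a function (values outside the domain irrelevant) *)
Definition range {X : Polish} (dom : X -> Prop) (f : X -> X) (y : X) : Prop :=
  exists x, dom x /\ f x = y.

Definition partial_cont_open {X : Polish} (dom : X -> Prop) (f : X -> X) : Prop :=
  is_open dom /\ is_open (range dom f) /\
  (forall x, dom x -> forall eps, 0 < eps -> exists del, 0 < del /\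
     forall x', dom x' -> dist x x' < del -> dist (f x) (f x') < eps) /\
  (forall U : X -> Prop, is_open U -> (forall x, U x -> dom x) ->
     is_open (fun y => exists x, U x /\ f x = y)).

Definition graph {X : Polish} (dom : X -> Prop) (f : X -> X) (x y : X) : Prop :=
  dom x /\ f x = y.

Definition Af {X : Polish} (dom : nat -> X -> Prop) (f : nat -> X -> X) (x y : X) : Prop :=
  exists n, graph (dom n) (f n) x y.

Definition complex_situation (X : Polish) (dom : nat -> X -> Prop) (f : nat -> X -> X) : Prop :=
  inhabited X /\
  (forall n, partial_cont_open (dom n) (f n)) /\
  (forall x, closure2 (Af dom f) x x /\ ~ Af dom f x x).

Definition digraph {X : Polish} (A : X -> X -> Prop) : Prop := forall x, ~ A x x.

Definition uncountable_borel_chromatic {X : Polish} (A : X -> X -> Prop) : Prop :=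
  forall (Y : Polish) (c : X -> Y), countable_type Y -> borel_fun c ->
    exists x x', A x x' /\ c x = c x'.

(* Main.v *)
Require Import Defs.
From Stdlib Require Import Reals Lra Lia Classical ClassicalEpsilon Cantor.
Open Scope R_scope.

Definition nwd {X : Polish} (N : X -> Prop) : Prop :=
  forall U, is_open U -> (exists x, U x) ->
    exists V, is_open V /\ (exists x, V x) /\ (forall x, V x -> U x /\ ~ N x).

Definition meager {X : Polish} (M : X -> Prop) : Prop :=
  exists N : nat -> X -> Prop, (forall k, nwd (N k)) /\ forall x, M x -> exists k, N k x.

Definition BP {X : Polish} (A : X -> Prop) : Prop :=
  exists U, is_open U /\ meager (fun x => (A x /\ ~ U x) \/ (U x /\ ~ A x)).

Lemma ball_open {X : Polish} (x : X) r : is_open (fun y => Defs.dist x y < r).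
Proof.
  intros y Hy. exists (r - Defs.dist x y). split; [lra|].
  intros z Hz. pose proof (Defs.dist_tri _ x y z). lra.
Qed.

Lemma open_and {X : Polish} (U V : X -> Prop) : is_open U -> is_open V ->
  is_open (fun x => U x /\ V x).
Proof.
  intros HU HV x [Ux Vx]. destruct (HU x Ux) as [e1 [He1 H1]].
  destruct (HV x Vx) as [e2 [He2 H2]]. exists (Rmin e1 e2). split.
  - apply Rmin_pos; auto.
  - intros y Hy. split; [apply H1|apply H2]; pose proof (Rmin_l e1 e2); pose proof (Rmin_r e1 e2); lra.
Qed.

Lemma nwd_sub {X : Polish} (N N' : X -> Prop) : nwd N -> (forall x, N' x -> N x) -> nwd N'.
Proof.
  intros H Hs U HU Hne. destruct (H U HU Hne) as [V [HV [Hv HVU]]].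
  exists V; repeat split; auto. - apply HVU; auto. - intro; apply (proj2 (HVU x H0)); auto.
Qed.

Lemma nwd_union {X : Polish} (N1 N2 : X -> Prop) : nwd N1 -> nwd N2 ->
  nwd (fun x => N1 x \/ N2 x).
Proof.
  intros H1 H2 U HU Hne. destruct (H1 U HU Hne) as [V [HV [Hv HVU]]].
  destruct (H2 V HV Hv) as [W [HW [Hw HWV]]].
  exists W; repeat split; auto.
  - destruct (HWV x H) as [Vx _]. apply (HVU x Vx).
  - intros [N|N]. + destruct (HWV x H) as [Vx _]. apply (HVU x Vx); auto.
    + apply (HWV x H); auto.
Qed.

Lemma meager_sub {X : Polish} (M M' : X -> Prop) : meager M -> (forall x, M' x -> M x) -> meager M'.
Proof.
  intros [N [HN HM]] Hs. exists N. split; auto.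
Qed.

Lemma meager_cunion {X : Polish} (M : nat -> X -> Prop) : (forall i, meager (M i)) ->
  meager (fun x => exists i, M i x).
Proof.
  intros H.
  set (NN := fun i => proj1_sig (constructive_indefinite_description _ (H i))).
  assert (HNN : forall i, (forall k, nwd (NN i k)) /\ forall x, M i x -> exists k, NN i k x).
  { intro i. unfold NN. destruct (constructive_indefinite_description _ (H i)); simpl; auto. }
  exists (fun m x => let (i, k) := of_nat m in NN i k x). split.
  - intro m. destruct (of_nat m) as [i k]. apply HNN.
  - intros x [i Hi]. destruct (proj2 (HNN i) x Hi) as [k Hk].
    exists (to_nat (i, k)). rewrite cancel_of_to. auto.
Qed.

Lemma meager_union {X : Polish} (M1 M2 : X -> Prop) : meager M1 -> meager M2 ->
  meager (fun x => M1 x \/ M2 x).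
Proof.
  intros H1 H2.
  apply (meager_sub (fun x => exists i, (fun i => match i with O => M1 | _ => M2 end) i x)).
  - apply meager_cunion. intros [|i]; auto.
  - intros x [h|h]; [exists O|exists (S O)]; auto.
Qed.
Lemma dist_refl {X : Polish} (x : X) : Defs.dist x x = 0.
Proof. apply (proj2 (dist_eq0 _ x x)); auto. Qed.

Lemma nwd_empty {X : Polish} : nwd (fun _ : X => False).
Proof. intros U HU Hne. exists U; repeat split; auto. Qed.

Lemma meager_nwd {X : Polish} (N : X -> Prop) : nwd N -> meager N.
Proof. intros H. exists (fun _ => N). split; auto. intros x Hx; exists O; auto. Qed.

Lemma BP_open {X : Polish} (U : X -> Prop) : is_open U -> BP U.
Proof.
  intros HU. exists U. split; auto. apply (meager_sub (fun _ => False)).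
  - apply meager_nwd, nwd_empty.
  - intros x [[a b]|[a b]]; auto.
Qed.

Lemma BP_ext {X : Polish} (A A' : X -> Prop) : (forall x, A x <-> A' x) -> BP A -> BP A'.
Proof.
  intros He [U [HU HM]]. exists U. split; auto. eapply meager_sub; [exact HM|].
  intros x [[a b]|[a b]]; [left|right]; split; auto; try apply He; auto.
  intro; apply b, He; auto.
Qed.

Lemma BP_union {X : Polish} (A : nat -> X -> Prop) : (forall n, BP (A n)) ->
  BP (fun x => exists n, A n x).
Proof.
  intros H.
  set (UU := fun i => proj1_sig (constructive_indefinite_description _ (H i))).
  assert (HUU : forall i, is_open (UU i) /\ meager (fun x => (A i x /\ ~ UU i x) \/ (UU i x /\ ~ A i x))).
  { intro i. unfold UU. destruct (constructive_indefinite_description _ (H i)); simpl; auto. }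
  exists (fun x => exists n, UU n x). split.
  - intros x [n Hn]. destruct (proj1 (HUU n) x Hn) as [e [He Hb]].
    exists e; split; auto. intros y Hy; exists n; auto.
  - eapply meager_sub. { apply meager_cunion. intro i. exact (proj2 (HUU i)). }
    intros x [[[n An] nU]|[[n Un] nA]]; exists n.
    + left; split; auto. intro; apply nU; exists n; auto.
    + right; split; auto. intro; apply nA; exists n; auto.
Qed.

Lemma BP_compl {X : Polish} (A : X -> Prop) : BP A -> BP (fun x => ~ A x).
Proof.
  intros [U [HU HM]].
  set (W := fun x => exists e, 0 < e /\ forall y, Defs.dist x y < e -> ~ U y).
  exists W. split.
  - intros x [e [He Hb]]. exists (e - Defs.dist x x). rewrite (dist_refl x).
    split; [lra|]. intros y Hy. exists (e - Defs.dist x y). split.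
    + pose proof (dist_nonneg _ x y). lra.
    + intros z Hz. apply Hb. pose proof (Defs.dist_tri _ x y z). lra.
  - apply (meager_sub (fun x => ((A x /\ ~ U x) \/ (U x /\ ~ A x)) \/ (~ U x /\ ~ W x))).
    + apply meager_union; auto. apply meager_nwd.
      intros U' HU' [x0 Hx0]. destruct (classic (exists z, U' z /\ U z)) as [[z [Hz1 Hz2]]|Hn].
      * exists (fun x => U' x /\ U x). split; [apply open_and; auto|]. split; [exists z; auto|].
        intros x [a b]; split; auto. intros [c _]; auto.
      * exists U'. split; auto. split; [exists x0; auto|]. intros x Hx; split; auto.
        intros [_ c]. apply c. destruct (HU' x Hx) as [e [He Hb]]. exists e; split; auto.
        intros y Hy Uy. apply Hn. exists y; auto.
    + intros x [[nA nW]|[Wx Ax]].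
      * destruct (classic (U x)); [left; right; auto | right; auto].
      * left; left; split; [apply NNPP; auto|]. destruct Wx as [e [He Hb]]. apply Hb.
        rewrite (dist_refl x). auto.
Qed.

Lemma borel_BP {X : Polish} (B : X -> Prop) : borel B -> BP B.
Proof.
  intros H. apply H.
  - apply BP_open. - apply BP_compl. - apply BP_union.
  - intros A A' He; apply BP_ext; auto.
Qed.
Lemma baire_step {X : Polish} (N : X -> Prop) (x : X) r b : nwd N -> 0 < r -> 0 < b ->
  exists x' r', 0 < r' /\ r' <= b /\
    forall y, Defs.dist x' y <= r' -> Defs.dist x y < r /\ ~ N y.
Proof.
  intros HN Hr Hb. destruct (HN (fun y => Defs.dist x y < r) (ball_open x r)) as [V [HV [[x' Hx'] HVs]]].
  { exists x. rewrite dist_refl. auto. }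
  destruct (HV x' Hx') as [e [He Hball]].
  exists x', (Rmin (e/2) b). split; [apply Rmin_pos; lra|]. split; [apply Rmin_r|].
  intros y Hy. apply HVs, Hball. pose proof (Rmin_l (e/2) b). lra.
Qed.

Lemma baire {X : Polish} (U : X -> Prop) (N : nat -> X -> Prop) :
  is_open U -> (exists x, U x) -> (forall k, nwd (N k)) -> exists x, U x /\ forall k, ~ N k x.
Proof.
  intros HU [x0 Hx0] HN. destruct (HU x0 Hx0) as [r0 [Hr0 Hb0]].
  assert (Hex : forall k (p : X * R), exists p' : X * R, 0 < snd p ->
     0 < snd p' /\ snd p' <= / INR (S k) /\
     forall y, Defs.dist (fst p') y <= snd p' -> Defs.dist (fst p) y < snd p /\ ~ N k y).
  { intros k [x r]. simpl. destruct (Rlt_dec 0 r) as [Hr|Hr].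
    - destruct (baire_step (N k) x r (/ INR (S k)) (HN k) Hr) as [x' [r' H]].
      { apply Rinv_0_lt_compat, lt_0_INR; lia. }
      exists (x', r'); simpl; auto.
    - exists (x, r); intro; contradiction. }
  set (F := fun k p => proj1_sig (constructive_indefinite_description _ (Hex k p))).
  assert (HF : forall k p, 0 < snd p -> 0 < snd (F k p) /\ snd (F k p) <= / INR (S k) /\
     forall y, Defs.dist (fst (F k p)) y <= snd (F k p) -> Defs.dist (fst p) y < snd p /\ ~ N k y).
  { intros k p. unfold F. destruct (constructive_indefinite_description _ (Hex k p)); simpl; auto. }
  set (s := fix s k := match k with O => (x0, r0) | S k => F k (s k) end).
  assert (Hpos : forall k, 0 < snd (s k)).
  { induction k; simpl; auto. apply HF; auto. }
  assert (Hstep : forall k y, Defs.dist (fst (s (S k))) y <= snd (s (S k)) ->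
      Defs.dist (fst (s k)) y < snd (s k) /\ ~ N k y).
  { intros k. apply (HF k (s k)), Hpos. }
  assert (Hrad : forall k, snd (s (S k)) <= / INR (S k)).
  { intro k. apply (HF k (s k)), Hpos. }
  assert (Hnest : forall k j y, Defs.dist (fst (s (j + k)%nat)) y <= snd (s (j + k)%nat) ->
      Defs.dist (fst (s k)) y <= snd (s k)).
  { intros k j. induction j; intros y Hy; simpl in Hy; auto.
    apply IHj. left. apply (Hstep (j + k)%nat y Hy). }
  assert (Hnest' : forall k m, (k <= m)%nat -> Defs.dist (fst (s k)) (fst (s m)) <= snd (s k)).
  { intros k m Hkm. replace m with ((m - k) + k)%nat by lia. apply (Hnest k (m - k)%nat).
    rewrite dist_refl. left; apply Hpos. }
  destruct (dist_complete X (fun k => fst (s k))) as [l Hl].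
  { intros eps Heps. destruct (archimed_cor1 (eps/2)) as [M [HM1 HM2]]; [lra|].
    exists M. intros m n Hm Hn.
    assert (Hb : forall m, (M <= m)%nat -> snd (s m) < eps / 2).
    { intros m' Hm'. destruct m' as [|m']; [lia|].
      eapply Rle_lt_trans; [apply Hrad|]. eapply Rle_lt_trans; [|exact HM1].
      apply Rinv_le_contravar; [apply lt_0_INR; lia| apply le_INR; lia]. }
    pose proof (Hnest' M m Hm). pose proof (Hnest' M n Hn). pose proof (Hb M (le_n M)).
    pose proof (Defs.dist_tri _ (fst (s m)) (fst (s M)) (fst (s n))).
    rewrite (Defs.dist_sym _ (fst (s m)) (fst (s M))) in H2. lra. }
  assert (Hlim : forall m, Defs.dist (fst (s m)) l <= snd (s m)).
  { intro m. apply Rnot_lt_le. intro Hc.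
    destruct (Hl (Defs.dist (fst (s m)) l - snd (s m))) as [K HK]; [lra|].
    pose proof (HK (Nat.max K m) (Nat.le_max_l K m)).
    pose proof (Hnest' m (Nat.max K m) (Nat.le_max_r K m)).
    pose proof (Defs.dist_tri _ (fst (s m)) (fst (s (Nat.max K m))) l). lra. }
  exists l. split.
  - apply Hb0. apply (Hstep O l (Hlim 1%nat)).
  - intro k. apply (Hstep k l (Hlim (S k))).
Qed.
Lemma preimage_open {X : Polish} (D O : X -> Prop) (f : X -> X) : is_open D -> is_open O ->
  (forall x, D x -> forall eps, 0 < eps -> exists del, 0 < del /\
     forall x', D x' -> Defs.dist x x' < del -> Defs.dist (f x) (f x') < eps) ->
  is_open (fun z => D z /\ O (f z)).
Proof.
  intros HD HO Hc z [Dz Oz]. destruct (HD z Dz) as [e1 [He1 H1]].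
  destruct (HO (f z) Oz) as [e2 [He2 H2]]. destruct (Hc z Dz e2 He2) as [del [Hdel H3]].
  exists (Rmin e1 del). split; [apply Rmin_pos; auto|].
  intros y Hy. pose proof (Rmin_l e1 del). pose proof (Rmin_r e1 del).
  assert (Dy : D y) by (apply H1; lra). split; auto. apply H2, H3; auto; lra.
Qed.

Lemma borel_compl {X : Polish} (A : X -> Prop) : borel A -> borel (fun x => ~ A x).
Proof. intros H S H1 H2 H3 H4. apply H2, H; auto. Qed.

Lemma borel_ext {X : Polish} (A A' : X -> Prop) : (forall x, A x <-> A' x) -> borel A -> borel A'.
Proof. intros He H S H1 H2 H3 H4. eapply H4; [exact He|]. apply H; auto. Qed.

Lemma meager_empty {X : Polish} : meager (fun _ : X => False).
Proof. apply meager_nwd, nwd_empty. Qed.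

Lemma nwd_preimage {X : Polish} (dom : X -> Prop) (f : X -> X) (V N : X -> Prop) :
  partial_cont_open dom f -> is_open V -> (forall z, V z -> dom z) -> nwd N ->
  nwd (fun z => V z /\ N (f z)).
Proof.
  intros [Hdom [_ [Hcont Hopen]]] HV HVd HN W HW [w0 Hw0].
  destruct (classic (exists w, W w /\ V w)) as [[w [Ww Vw]]|Hn].
  - assert (HWV : is_open (fun z => W z /\ V z)) by (apply open_and; auto).
    destruct (HN (fun t => exists z, (W z /\ V z) /\ f z = t)) as [O [HO [[t Ot] HOs]]].
    + apply Hopen; auto. intros x [_ Vx]; auto.
    + exists (f w), w; auto.
    + exists (fun z => (W z /\ V z) /\ O (f z)). split; [|split].
      * apply preimage_open; auto. intros x [_ Vx] eps Heps.
        destruct (Hcont x (HVd x Vx) eps Heps) as [del [Hdel H]]. exists del; split; auto.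
        intros x' [_ Vx'] Hd. apply H; auto.
      * destruct (HOs t Ot) as [[z [Hz Hzt]] _]. exists z. rewrite Hzt. auto.
      * intros x [[Wx Vx] Ox]. split; auto. intros [_ Nx]. apply (HOs (f x) Ox); auto.
  - exists W. split; auto. split; [exists w0; auto|]. intros x Wx. split; auto.
    intros [Vx _]. apply Hn; eauto.
Qed.

Lemma sigma02_Af {X : Polish} (dom : nat -> X -> Prop) (f : nat -> X -> X) :
  (forall n, partial_cont_open (dom n) (f n)) -> Sigma02 (Af dom f).
Proof.
  intros Hpc.
  set (Dk := fun n k x => forall z, Defs.dist x z < / INR (S k) -> dom n z).
  exists (fun m x y => let (n, k) := of_nat m in Dk n k x /\ f n x = y). split.
  - intro m. destruct (of_nat m) as [n k]. intros x y Hxy.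
    destruct (Hpc n) as [Hdom [_ [Hcont _]]].
    destruct (classic (Dk n k x)) as [HD|HD].
    + assert (Hne : f n x <> y) by (intro; apply Hxy; auto).
      set (d := Defs.dist (f n x) y).
      assert (Hd : 0 < d).
      { destruct (dist_nonneg _ (f n x) y) as [h|h]; auto. exfalso; apply Hne, (dist_eq0 _ _ _); auto. }
      destruct (Hcont x (HD x ltac:(rewrite dist_refl; apply Rinv_0_lt_compat, lt_0_INR; lia)) (d/2)) as [del [Hdel Hc]]; [lra|].
      exists (Rmin del (d/2)). split; [apply Rmin_pos; lra|].
      intros x' y' H1 H2 [HD' Hf]. pose proof (Rmin_l del (d/2)). pose proof (Rmin_r del (d/2)).
      assert (Hdx' : dom n x') by (apply HD'; rewrite dist_refl; apply Rinv_0_lt_compat, lt_0_INR; lia).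
      pose proof (Hc x' Hdx' ltac:(lra)). rewrite Hf in H3.
      pose proof (Defs.dist_tri _ (f n x) y' y). rewrite (Defs.dist_sym _ y' y) in H4.
      unfold d in *. lra.
    + apply not_all_ex_not in HD. destruct HD as [z Hz].
      apply imply_to_and in Hz. destruct Hz as [Hz1 Hz2].
      exists (/ INR (S k) - Defs.dist x z). split; [lra|].
      intros x' y' H1 H2 [HD' _]. apply Hz2, HD'.
      pose proof (Defs.dist_tri _ x' x z). rewrite (Defs.dist_sym _ x' x) in H. lra.
  - intros x y. split.
    + intros [n [Hd Hf]]. destruct (Hpc n) as [Hdom _].
      destruct (Hdom x Hd) as [e [He Hb]].
      destruct (archimed_cor1 e He) as [N [HN HN0]].
      exists (to_nat (n, N)). rewrite cancel_of_to. split; auto.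
      intros z Hz. apply Hb. eapply Rlt_trans; [exact Hz|]. eapply Rle_lt_trans; [|exact HN].
      apply Rinv_le_contravar; [apply lt_0_INR; lia|apply le_INR; lia].
    + intros [m Hm]. destruct (of_nat m) as [n k]. destruct Hm as [HD Hf].
      exists n. split; auto. apply HD. rewrite dist_refl. apply Rinv_0_lt_compat, lt_0_INR; lia.
Qed.
Theorem corollary2p2 (X : Polish) (dom : nat -> X -> Prop) (f : nat -> X -> X) :
  complex_situation X dom f ->
  digraph (Af dom f) /\ Sigma02 (Af dom f) /\ uncountable_borel_chromatic (Af dom f).
Proof.
  intros [[x00] [Hpc Hdiag]]. split; [|split].
  - intro x. apply Hdiag.
  - apply sigma02_Af; auto.
  - intros Y c [g Hg] Hc.
    assert (HB : forall y : Y, BP (fun x => c x = y)).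
    { intro y. apply borel_BP. apply (borel_ext (fun x => ~ ~ (c x = y))).
      { intro x; split; [apply NNPP|auto]. }
      apply borel_compl. apply (Hc (fun z => z <> y)).
      intros z Hz. exists (Defs.dist z y). split.
      - destruct (dist_nonneg _ z y) as [h|h]; auto. exfalso; apply Hz, (dist_eq0 _ _ _); auto.
      - intros w Hw Hwy. subst w. lra. }
    set (UU := fun y => proj1_sig (constructive_indefinite_description _ (HB y))).
    assert (HUU : forall y, is_open (UU y) /\
      meager (fun x => (c x = y /\ ~ UU y x) \/ (UU y x /\ ~ c x = y))).
    { intro y. unfold UU. destruct (constructive_indefinite_description _ (HB y)); simpl; auto. }
    assert (Hne : exists y x, UU y x).
    { apply NNPP. intro Hn.
      assert (Hm : meager (fun x => exists n, exists y, g y = n /\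
           ((c x = y /\ ~ UU y x) \/ (UU y x /\ ~ c x = y)))).
      { apply meager_cunion. intro n. destruct (classic (exists y, g y = n)) as [[y Hy]|Hny].
        - eapply meager_sub; [exact (proj2 (HUU y))|]. intros x [y' [Hy' H]].
          assert (y' = y) by (apply Hg; congruence). subst y'. auto.
        - eapply meager_sub; [exact meager_empty|]. intros x [y' [Hy' _]]. apply Hny; eauto. }
      destruct Hm as [N [HN Hcov]].
      destruct (baire (fun _ => True) N) as [x [_ Hx]]; auto.
      { intros x _. exists 1; split; auto; lra. }
      { exists x00; auto. }
      destruct (Hcov x) as [k Hk].
      { exists (g (c x)), (c x). split; auto. left. split; auto. intro; apply Hn; eauto. }
      apply (Hx k Hk). }
    destruct Hne as [y [x0 Hx0]].
    destruct (HUU y) as [HUo [N [HN Hcov]]].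
    destruct (HUo x0 Hx0) as [e [He Hball]].
    destruct (proj1 (Hdiag x0) e He) as [x' [y' [H1 [H2 [n [Hd Hf]]]]]].
    set (V := fun z => (dom n z /\ Defs.dist x0 (f n z) < e) /\ Defs.dist x0 z < e).
    destruct (Hpc n) as [Hdom [Hrng [Hcont Hop]]].
    assert (HV : is_open V).
    { apply open_and; [|apply ball_open]. apply (preimage_open (dom n) (fun t => Defs.dist x0 t < e) (f n)); auto. apply ball_open. }
    destruct (baire V (fun k z => N k z \/ (V z /\ N k (f n z)))) as [z [Vz Hz]]; auto.
    { exists x'. unfold V. rewrite Hf. auto. }
    { intro k. apply nwd_union; auto. apply (nwd_preimage (dom n)); auto.
      intros z [[a _] _]; auto. }
    destruct Vz as [[Dz Fz] Bz].
    assert (Hc1 : c z = y).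
    { apply NNPP. intro Hcz. destruct (Hcov z) as [k Hk].
      - right. split; auto.
      - apply (Hz k); auto. }
    assert (Hc2 : c (f n z) = y).
    { apply NNPP. intro Hcz. destruct (Hcov (f n z)) as [k Hk].
      - right. split; auto.
      - apply (Hz k). right. split; auto. unfold V; auto. }
    exists z, (f n z). split.
    + exists n. split; auto.
    + congruence.
Qed.
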